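(* Let $B=\bigoplus_{i\in\mathbb{Z}}B_i$ be a $\mathbb{Z}$-graded integral domain with $e(B)=1$. For each $d\in\mathbb{N}\setminus\{0,1\}$ we have $\mathcal{X}_d\neq\emptyset$, and the following are equivalent: (a) no height-$1$ prime ideal of $B$ contains $\mathcal{X}_d$; (b) $\gcd(e(B/\mathfrak{p}),d)=1$ for every homogeneous prime ideal $\mathfrak{p}$ of $B$ of height $1$; (c) $d\in\Pi^*(B)$.
   Context: For a $\mathbb{Z}$-graded domain $C$, $e(C)=\gcd\{i\in\mathbb{Z}:C_i\neq0\}$. $\mathcal{X}_d$ is the set of nonzero homogeneous $x\in B$ with $\gcd(\deg x,d)=1$. $\Pi(B)$ is the set of primes $p$ with $p\mid e(B/\mathfrak{p})$ for some homogeneous height-$1$ prime $\mathfrak{p}$ of $B$; $\Pi^*(B)$ is the set of positive integers not divisible by any element of $\Pi(B)$. *)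

(* Defs.v *)
From Stdlib Require Import ClassicalEpsilon.
From mathcomp Require Import all_boot all_order all_algebra.
Set Implicit Arguments. Unset Strict Implicit. Unset Printing Implicit Defensive.
Import Order.TTheory GRing.Theory Num.Theory.
Local Open Scope ring_scope.

(* gcd of an arbitrary (possibly infinite) set of integers: the unique
   natural number n such that n divides every element of S and every
   common divisor of S divides n (n = 0 iff S is contained in {0}). *)
Definition is_gcd_set (S : int -> Prop) (n : nat) : Prop :=
  (forall i, S i -> (n%:Z %| i)%Z) /\
  (forall m : nat, (forall i, S i -> (m%:Z %| i)%Z) -> (m %| n)%N).

Definition gcd_set (S : int -> Prop) : nat :=
  epsilon (inhabits 0%N) (is_gcd_set S).

Section Graded.
Variable B : idomainType.
(* G i is the homogeneous component B_i *)
Variable G : int -> B -> Prop.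

Definition is_Zgrading : Prop :=
  [/\ (forall i, G i 0),
      (forall i x y, G i x -> G i y -> G i (x - y)),
      (forall i j x y, G i x -> G j y -> G (i + j) (x * y)),
      (forall x : B, exists (s : seq int) (f : int -> B),
          [/\ uniq s, forall i, G i (f i) & x = \sum_(i <- s) f i])
    & (forall (s : seq int) (f : int -> B), uniq s -> (forall i, G i (f i)) ->
          \sum_(i <- s) f i = 0 -> forall i, i \in s -> f i = 0)].

Definition e_ring : nat := gcd_set (fun i => exists x, G i x /\ x <> 0).

Definition is_ideal (I : B -> Prop) : Prop :=
  [/\ I 0, (forall x y, I x -> I y -> I (x - y)) & (forall a x, I x -> I (a * x))].

Definition is_prime_ideal (P : B -> Prop) : Prop :=
  [/\ is_ideal P, ~ P 1 & (forall x y, P (x * y) -> P x \/ P y)].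

Definition strict_incl (P Q : B -> Prop) : Prop :=
  (forall x, P x -> Q x) /\ exists x, Q x /\ ~ P x.

Definition prime_chain_to (P : B -> Prop) (n : nat) : Prop :=
  exists q : nat -> B -> Prop,
    [/\ forall k, (k <= n)%N -> is_prime_ideal (q k),
        forall k, (k < n)%N -> strict_incl (q k) (q k.+1)
      & forall x, q n x <-> P x].

Definition height_one (P : B -> Prop) : Prop :=
  is_prime_ideal P /\ prime_chain_to P 1 /\ ~ prime_chain_to P 2.

Definition is_homogeneous_ideal (P : B -> Prop) : Prop :=
  is_ideal P /\
  forall x, P x -> forall (s : seq int) (f : int -> B),
    uniq s -> (forall i, G i (f i)) -> x = \sum_(i <- s) f i ->
    forall i, i \in s -> P (f i).

(* e(B/P), where B/P carries the quotient grading (B/P)_i = image of B_i;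
   (B/P)_i <> 0 iff some x in B_i is not in P. *)
Definition e_quot (P : B -> Prop) : nat :=
  gcd_set (fun i => exists x, G i x /\ ~ P x).

Definition X_set (d : nat) (x : B) : Prop :=
  x <> 0 /\ exists i : int, G i x /\ coprime `|i|%N d.

Definition Pi_set (p : nat) : Prop :=
  prime p /\ exists P, is_homogeneous_ideal P /\ height_one P /\ (p %| e_quot P)%N.

Definition Pi_star (d : nat) : Prop :=
  (0 < d)%N /\ forall p, Pi_set p -> ~~ (p %| d)%N.

End Graded.

(* Main.v *)
From Stdlib Require Import ClassicalEpsilon Classical.
Require Import Defs.
From mathcomp Require Import all_boot all_order all_algebra zify.
Set Implicit Arguments. Unset Strict Implicit. Unset Printing Implicit Defensive.
Import Order.TTheory GRing.Theory Num.Theory.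

Section AB.
Local Open Scope ring_scope.

Lemma bounded_max (P : nat -> Prop) (N : nat) :
  (exists m, P m) -> (forall m, P m -> (m <= N)%N) ->
  exists m, P m /\ forall k, P k -> (k <= m)%N.
Proof.
move=> [m0 Pm0] bnd; apply: NNPP => nomax.
have H : forall j, exists m, P m /\ (j <= m)%N.
  elim=> [|j IHj]; first by exists m0; split.
  have [m [Pm jm]] := IHj.
  have : ~ (forall k, P k -> (k <= m)%N) by move=> h; apply: nomax; exists m.
  move=> h; have [k hk] := not_all_ex_not _ _ h.
  have [Pk /negP] := imply_to_and _ _ hk; rewrite -ltnNge => mk.
  by exists k; split=> //; apply: leq_ltn_trans jm mk.
have [m [Pm le]] := H N.+1.
have := bnd _ Pm; rewrite leqNgt; by rewrite le.
Qed.

Lemma gcd_exists (S : int -> Prop) : exists n, is_gcd_set S n.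
Proof.
case: (classic (exists i, S i /\ i <> 0)) => [[i0 [Si0 i0n]]|none].
- pose P := fun m : nat => forall i, S i -> (m%:Z %| i)%Z.
  have bnd : forall m, P m -> (m <= `|i0|)%N.
    move=> m Pm; have := Pm _ Si0; rewrite dvdzE absz_nat => h.
    by apply: dvdn_leq => //; rewrite absz_gt0; apply/eqP.
  have P1 : P 1%N by move=> i _; rewrite dvdzE absz_nat dvd1n.
  have [n [Pn mx]] := bounded_max (ex_intro _ 1%N P1) bnd.
  exists n; split=> // m Pm.
  have Pl : P (lcmn m n).
    move=> i Si; have := Pm _ Si; have := Pn _ Si.
    by rewrite !dvdzE !absz_nat dvdn_lcm => -> ->.
  have le := mx _ Pl.
  have lpos : (0 < lcmn m n)%N.
    rewrite lt0n; apply/eqP => l0; have := Pl _ Si0.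
    rewrite dvdzE absz_nat l0 dvd0n absz_eq0 => /eqP; exact: i0n.
  have : lcmn m n = n.
    by apply/eqP; rewrite eqn_leq le dvdn_leq // dvdn_lcmr.
  by move=> <-; rewrite dvdn_lcml.
- exists 0%N; split.
  + move=> i Si; have -> : i = 0 by apply: NNPP => h; apply: none; exists i.
    exact: dvdz0.
  + by move=> m _; exact: dvdn0.
Qed.

Lemma gcd_set_spec (S : int -> Prop) : is_gcd_set S (gcd_set S).
Proof. rewrite /gcd_set; apply: epsilon_spec; exact: gcd_exists. Qed.

Lemma add_closed_coprime (S : int -> Prop) (d : nat) :
  (forall a b, S a -> S b -> S (a + b)) -> (1 < d)%N ->
  coprime (gcd_set S) d -> exists s, S s /\ coprime `|s| d.
Proof.
move=> Sadd d1 cop; have [g1 g2] := gcd_set_spec S.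
have wit : forall p, prime p -> (p %| d)%N -> exists i, S i /\ ~~ (p%:Z %| i)%Z.
  move=> p pp pd; apply: NNPP => h.
  have pg : (p %| gcd_set S)%N.
    apply: g2 => i Si; apply: NNPP => /negP hn; apply: h; exists i; split=> //.
  have : (p %| gcdn (gcd_set S) d)%N by rewrite dvdn_gcd pg pd.
  by rewrite (eqP cop) (Euclid_dvd1 pp).
have mult : forall y k, S y -> S (y *+ k.+1).
  move=> y; elim=> [|k IH] Sy; first by rewrite mulr1n.
  by rewrite mulrS; apply: Sadd => //; apply: IH.
have main : forall ps : seq nat, uniq ps ->
    (forall p, p \in ps -> prime p /\ (p %| d)%N) ->
    exists s, S s /\ forall p, p \in ps -> ~~ (p%:Z %| s)%Z.
  elim=> [|p ps IH] /=.
  - move=> _ _; have [i [Si _]] := wit (pdiv d) (pdiv_prime d1) (pdiv_dvd d).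
    by exists i.
  - move=> /andP [pnin u] hps; have [pp pd] := hps p (mem_head _ _).
    have [x [Sx hx]] : exists s, S s /\ forall q, q \in ps -> ~~ (q%:Z %| s)%Z.
      by apply: IH => // q qin; apply: hps; rewrite in_cons qin orbT.
    case px : (p%:Z %| x)%Z; last first.
      exists x; split=> // q; rewrite in_cons => /orP [/eqP ->|]; first by rewrite px.
      exact: hx.
    have [y [Sy py]] := wit p pp pd.
    pose Q := (\prod_(q <- ps) q)%N.
    have Qpos : (0 < Q)%N.
      rewrite /Q big_seq; apply: prodn_cond_gt0 => q qin.
      by have [qp _] := hps q (ltac:(by rewrite in_cons qin orbT)); apply: prime_gt0.
    exists (x + y *+ Q); split.
      by rewrite -(prednK Qpos); apply: Sadd => //; apply: mult.
    have dQ : forall m : int, (`|m *+ Q| = `|m| * Q)%N.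
      by move=> m; rewrite -mulr_natr abszM natz absz_nat.
    move=> q; rewrite in_cons => /orP [/eqP ->|qin].
    + rewrite rpredDl //; rewrite dvdzE dQ Euclid_dvdM // negb_or.
      move: py; rewrite dvdzE absz_nat => -> /=.
      rewrite /Q Euclid_dvd_prod // big_has; apply/hasPn => r rin.
      have [rp _] := hps r (ltac:(by rewrite in_cons rin orbT)).
      rewrite dvdn_prime2 //; apply/eqP => epr; move: pnin; by rewrite epr rin.
    + have qQ : (q%:Z %| y *+ Q)%Z.
        by rewrite dvdzE dQ absz_nat /Q (big_rem q qin) /= dvdn_mull // dvdn_mulr.
      rewrite rpredDr //; exact: hx.
have [s [Ss hs]] := main (primes d) (primes_uniq d)
  (fun p pin => ltac:(by move: pin; rewrite mem_primes => /and3P [-> _ ->])).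
exists s; split=> //.
apply/negPn/negP => nc.
have m1 : (1 < gcdn `|s| d)%N.
  rewrite ltn_neqAle eq_sym nc gcdn_gt0 (ltn_trans _ d1) ?orbT //.
have pm := pdiv_prime m1.
have pd : (pdiv (gcdn `|s| d) %| d)%N := dvdn_trans (pdiv_dvd _) (dvdn_gcdr _ _).
have ps : (pdiv (gcdn `|s| d) %| `|s|)%N := dvdn_trans (pdiv_dvd _) (dvdn_gcdl _ _).
have := hs (pdiv (gcdn `|s| d)).
rewrite mem_primes pm pd (ltn_trans _ d1) // dvdzE absz_nat ps.
by move=> /(_ isT).
Qed.
End AB.
Section Grad.
Local Open Scope ring_scope.
Variable B : idomainType.
Variable G : int -> B -> Prop.
Hypothesis hG : is_Zgrading G.

Lemma G0 i : G i 0. Proof. by case: hG. Qed.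
Lemma GB i x y : G i x -> G i y -> G i (x - y). Proof. by case: hG => _ h _ _ _; apply: h. Qed.
Lemma GM i j x y : G i x -> G j y -> G (i + j) (x * y). Proof. by case: hG => _ _ h _ _; apply: h. Qed.
Lemma GN i x : G i x -> G i (- x).
Proof. by move=> h; rewrite -sub0r; apply: GB => //; apply: G0. Qed.
Lemma GD i x y : G i x -> G i y -> G i (x + y).
Proof. by move=> hx hy; rewrite -[y]opprK; apply: GB => //; apply: GN. Qed.
Lemma Guniq (s : seq int) (f : int -> B) : uniq s -> (forall i, G i (f i)) ->
  \sum_(i <- s) f i = 0 -> forall i, i \in s -> f i = 0.
Proof. by case: hG => _ _ _ _ h; apply: h. Qed.

Definition decP (x : B) (p : seq int * (int -> B)) : Prop :=
  [/\ uniq p.1, forall i, G i (p.2 i) & x = \sum_(i <- p.1) p.2 i].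

Definition dec (x : B) : seq int * (int -> B) :=
  epsilon (inhabits ([::], fun _ => 0)) (decP x).

Lemma dec_spec x : decP x (dec x).
Proof.
rewrite /dec; apply: epsilon_spec.
case: hG => _ _ _ h _; have [s [f [u hf e]]] := h x.
by exists (s, f).
Qed.

Definition supp x := (dec x).1.
Definition comp (k : int) (x : B) := if k \in supp x then (dec x).2 k else 0.

Lemma supp_uniq x : uniq (supp x). Proof. by case: (dec_spec x). Qed.

Lemma compG k x : G k (comp k x).
Proof. rewrite /comp; case: ifP => _; [by case: (dec_spec x) | exact: G0]. Qed.

Lemma comp_supp k x : k \notin supp x -> comp k x = 0.
Proof. by rewrite /comp => /negPf ->. Qed.

Lemma sum_filter (s u : seq int) (F : int -> B) : uniq s -> uniq u ->
  {subset s <= u} -> \sum_(i <- u | i \in s) F i = \sum_(i <- s) F i.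
Proof.
move=> us uu su; rewrite -big_filter; apply: perm_big; apply: uniq_perm.
- exact: filter_uniq.
- exact: us.
- move=> i; rewrite mem_filter; case: (boolP (i \in s)) => //= h.
  exact: su.
Qed.

Lemma comp_sum_sub x s : uniq s -> {subset supp x <= s} ->
  \sum_(i <- s) comp i x = x.
Proof.
move=> us sub; rewrite /comp -big_mkcond sum_filter //; last exact: supp_uniq.
by case: (dec_spec x).
Qed.

Lemma comp_uniq x s f : uniq s -> (forall i, G i (f i)) ->
  x = \sum_(i <- s) f i -> forall k, comp k x = if k \in s then f k else 0.
Proof.
move=> us hf ex k.
pose u := undup (supp x ++ s).
have uu : uniq u := undup_uniq _.
have s1 : {subset supp x <= u} by move=> i; rewrite mem_undup mem_cat => ->.
have s2 : {subset s <= u} by move=> i; rewrite mem_undup mem_cat => ->; rewrite orbT.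
pose g i := comp i x - (if i \in s then f i else 0).
have Gg : forall i, G i (g i).
  move=> i; apply: GB; first exact: compG.
  by case: ifP => _; [apply: hf | apply: G0].
have sg : \sum_(i <- u) g i = 0.
  rewrite sumrB comp_sum_sub // -big_mkcond sum_filter //.
  by rewrite -ex subrr.
case: (boolP (k \in u)) => ku.
  by apply/eqP; rewrite -subr_eq0; apply/eqP; apply: (Guniq uu Gg sg).
move: ku; rewrite mem_undup mem_cat negb_or => /andP [k1 k2].
by rewrite comp_supp // (negPf k2).
Qed.

Lemma comp_hom i a k : G i a -> comp k a = if k == i then a else 0.
Proof.
move=> Ga; have := @comp_uniq a [:: i] (fun j => if j == i then a else 0).
rewrite big_seq1 eqxx => /(_ isT) h; rewrite h //.
- by rewrite inE; case: (k == i).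
- by move=> j; case: ifP => [/eqP -> // |_]; apply: G0.
Qed.

Lemma comp0 k : comp k 0 = 0.
Proof. by rewrite (comp_hom k (G0 0)); case: ifP. Qed.

Lemma compB k x y : comp k (x - y) = comp k x - comp k y.
Proof.
pose u := undup (supp x ++ supp y).
have uu : uniq u := undup_uniq _.
have s1 : {subset supp x <= u} by move=> i; rewrite mem_undup mem_cat => ->.
have s2 : {subset supp y <= u} by move=> i; rewrite mem_undup mem_cat => ->; rewrite orbT.
have e : x - y = \sum_(i <- u) (comp i x - comp i y).
  by rewrite sumrB !comp_sum_sub.
rewrite (comp_uniq uu _ e); last by move=> i; apply: GB; apply: compG.
case: ifP => // ku.
move: ku; rewrite mem_undup mem_cat => /negbT; rewrite negb_or => /andP [k1 k2].
by rewrite !comp_supp // subrr.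
Qed.

Lemma compN k x : comp k (- x) = - comp k x.
Proof. have := compB k 0 x; by rewrite comp0 !sub0r. Qed.

Lemma compD k x y : comp k (x + y) = comp k x + comp k y.
Proof. by have := compB k x (- y); rewrite opprK compN opprK. Qed.

Lemma comp_big k (s : seq int) (F : int -> B) :
  comp k (\sum_(i <- s) F i) = \sum_(i <- s) comp k (F i).
Proof.
elim: s => [|a s IH]; first by rewrite !big_nil comp0.
by rewrite !big_cons compD IH.
Qed.

Lemma compM_hom i a y k : G i a -> comp k (a * y) = a * comp (k - i) y.
Proof.
move=> Ga.
pose t := [seq j + i | j <- supp y].
have ut : uniq t by rewrite map_inj_uniq; [exact: supp_uniq | exact: addIr].
have e : a * y = \sum_(l <- t) a * comp (l - i) y.
  rewrite big_map -{1}(comp_sum_sub (supp_uniq y) (fun _ h => h)) mulr_sumr.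
  by apply: eq_bigr => j _; rewrite addrK.
have Gf : forall l, G l (a * comp (l - i) y).
  by move=> l; have := GM Ga (compG (l - i) y); rewrite addrC subrK.
rewrite (comp_uniq ut Gf e); case: ifP => // kt.
rewrite comp_supp ?mulr0 //; apply/negP => h; move/negbT: kt => /negP; apply.
by apply/mapP; exists (k - i) => //; rewrite subrK.
Qed.

Lemma compM x y k :
  comp k (x * y) = \sum_(i <- supp x) comp i x * comp (k - i) y.
Proof.
rewrite -{1}(comp_sum_sub (supp_uniq x) (fun _ h => h)) mulr_suml comp_big.
by apply: eq_bigr => i _; apply: compM_hom; apply: compG.
Qed.


Lemma ideal_add (P : B -> Prop) : is_ideal P -> forall x y, P x -> P y -> P (x + y).
Proof.
case=> P0 PB _ x y Px Py; have := PB x (0 - y) Px (PB 0 y P0 Py).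
by rewrite sub0r opprK.
Qed.

Lemma ideal_big (P : B -> Prop) (s : seq int) (C : pred int) (F : int -> B) :
  is_ideal P -> (forall i, C i -> P (F i)) -> P (\sum_(i <- s | C i) F i).
Proof.
move=> hP hF; apply: (big_ind P) => //; first by case: hP.
exact: ideal_add.
Qed.

Lemma ideal_mulr (P : B -> Prop) x a : is_ideal P -> P x -> P (x * a).
Proof. by case=> _ _ PM Px; rewrite mulrC; apply: PM. Qed.

Definition Pstar (P : B -> Prop) (x : B) : Prop := forall k, P (comp k x).

Lemma Pstar_sub P x : is_ideal P -> Pstar P x -> P x.
Proof.
move=> hP hx; rewrite -(comp_sum_sub (supp_uniq x) (fun _ h => h)).
by apply: ideal_big.
Qed.

Lemma Pstar_hom P i a : is_ideal P -> G i a -> P a -> Pstar P a.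
Proof.
move=> hP Ga Pa k; rewrite (comp_hom k Ga); case: ifP => // _; by case: hP.
Qed.

Lemma hom_of_Pstar P : is_ideal P -> (forall x, P x -> Pstar P x) ->
  is_homogeneous_ideal G P.
Proof.
move=> hP H; split=> // x Px s f us hf ex i iis.
by have := comp_uniq us hf ex i; rewrite iis => <-; apply: H.
Qed.

Lemma list_max (s : seq int) (Q : int -> Prop) : (exists i, i \in s /\ Q i) ->
  exists a, [/\ a \in s, Q a & forall i, i \in s -> Q i -> i <= a].
Proof.
elim: s => [|b s IH]; first by case=> i [].
move=> [i0 [i0in Qi0]]; case: (classic (exists i, i \in s /\ Q i)) => [ex|nex].
- have [a [ain Qa amax]] := IH ex.
  case: (classic (Q b)) => Qb.
  + case: (leP b a) => ba.
    * exists a; split=> //; first by rewrite in_cons ain orbT.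
      move=> i; rewrite in_cons => /orP [/eqP -> // |]; exact: amax.
    * exists b; split=> //; first by rewrite mem_head.
      move=> i; rewrite in_cons => /orP [/eqP -> // |iin Qi].
      by apply: le_trans (amax _ iin Qi) (ltW ba).
  + exists a; split=> //; first by rewrite in_cons ain orbT.
    move=> i; rewrite in_cons => /orP [/eqP -> // |]; exact: amax.
- have Qb : Q b.
    move: i0in; rewrite in_cons => /orP [/eqP <- //|i0s].
    by exfalso; apply: nex; exists i0.
  exists b; split=> //; first by rewrite mem_head.
  move=> i; rewrite in_cons => /orP [/eqP -> _ //|iin Qi].
  by exfalso; apply: nex; exists i.
Qed.

Lemma top_comp P x a : is_ideal P ->
  (forall i, i \in supp x -> ~ P (comp i x) -> i <= a) ->
  forall i, a < i -> P (comp i x).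
Proof.
move=> hP amax i ai; case: (boolP (i \in supp x)) => iin.
  apply: NNPP => nP; have := amax i iin nP; by rewrite leNgt ai.
by rewrite comp_supp //; case: hP.
Qed.

Lemma Pstar_prime P : is_prime_ideal P -> is_prime_ideal (Pstar P).
Proof.
case=> hP n1 pr; have [P0 PB PM] := hP.
split.
- split.
  + by move=> k; rewrite comp0.
  + by move=> x y hx hy k; rewrite compB; apply: PB.
  + move=> a x hx k; rewrite compM; apply: ideal_big => // i _.
    exact: PM.
- by move=> h; apply: n1; apply: Pstar_sub.
- move=> x y hxy; apply: NNPP => /not_or_and [nx ny].
  have [kx nkx] := not_all_ex_not _ _ nx.
  have [ky nky] := not_all_ex_not _ _ ny.
  have kxin : kx \in supp x.
    by apply: contraT => h; exfalso; apply: nkx; rewrite comp_supp.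
  have kyin : ky \in supp y.
    by apply: contraT => h; exfalso; apply: nky; rewrite comp_supp.
  have [a [ain Qa amax]] := @list_max (supp x) (fun i => ~ P (comp i x)) (ex_intro _ kx (conj kxin nkx)).
  have [b [bin Qb bmax]] := @list_max (supp y) (fun i => ~ P (comp i y)) (ex_intro _ ky (conj kyin nky)).
  have tx := top_comp hP amax; have ty := top_comp hP bmax.
  have h := hxy (a + b).
  rewrite compM (bigD1_seq a ain (supp_uniq x)) /= in h.
  have eab : a + b - a = b by rewrite addrAC subrr add0r.
  rewrite eab in h.
  have hR : P (\sum_(i <- supp x | i != a) comp i x * comp (a + b - i) y).
    apply: ideal_big => // i ia.
    move: ia; rewrite neq_lt => /orP [ia|ai].
    * apply: PM; apply: ty; lia.
    * by apply: ideal_mulr => //; apply: tx.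
  by have := PB _ _ h hR; rewrite addrK => /pr [/Qa|/Qb].
Qed.

End Grad.

Theorem lemma3p10 (B : idomainType) (G : int -> B -> Prop)
  (hG : is_Zgrading G) (he : e_ring G = 1%N) (d : nat) (hd : (2 <= d)%N) :
  (exists x, X_set G d x) /\
  ((~ exists P, height_one P /\ forall x, X_set G d x -> P x) <->
   (forall P, is_homogeneous_ideal G P -> height_one P -> coprime (e_quot G P) d)) /\
  ((forall P, is_homogeneous_ideal G P -> height_one P -> coprime (e_quot G P) d) <->
   Pi_star G d).
Proof.
have d1 : (1 < d)%N := hd.
have gt1 : forall m, ~~ coprime m d -> (1 < gcdn m d)%N.
  move=> m nc; rewrite ltn_neqAle eq_sym nc gcdn_gt0 (ltn_trans _ d1) ?orbT //.
have Xne : exists x, X_set G d x.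
  pose S0 := fun i : int => exists x, G i x /\ x <> 0%R.
  have Sadd : forall a b, S0 a -> S0 b -> S0 (a + b)%R.
    move=> a b [x [Gx xn]] [y [Gy yn]]; exists (x * y)%R; split; first exact: GM.
    by apply/eqP; rewrite mulf_neq0 //; apply/eqP.
  have cop : coprime (gcd_set S0) d.
    by have -> : gcd_set S0 = 1%N := he; exact: coprime1n.
  have [s [[x [Gx xn]] cs]] := add_closed_coprime Sadd d1 cop.
  by exists x; split=> //; exists s.
have bc : (forall P, is_homogeneous_ideal G P -> height_one P ->
             coprime (e_quot G P) d) <-> Pi_star G d.
  split.
  - move=> hb; split; first exact: ltnW.
    move=> p [pp [P [hP [h1 pe]]]]; apply/negP => pd.
    have := hb P hP h1; rewrite /coprime => /eqP g1.
    have : (p %| gcdn (e_quot G P) d)%N by rewrite dvdn_gcd pe pd.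
    by rewrite g1 (Euclid_dvd1 pp).
  - move=> [_ hc] P hP h1; apply: contraT => nc.
    have m1 := gt1 _ nc.
    have pp := pdiv_prime m1.
    have pd : (pdiv (gcdn (e_quot G P) d) %| d)%N :=
      dvdn_trans (pdiv_dvd _) (dvdn_gcdr _ _).
    have pe : (pdiv (gcdn (e_quot G P) d) %| e_quot G P)%N :=
      dvdn_trans (pdiv_dvd _) (dvdn_gcdl _ _).
    have := hc _ (conj pp (ex_intro _ P (conj hP (conj h1 pe)))).
    by rewrite pd.
split=> //; split; last exact: bc.
split.
- move=> ha P hP h1; apply: contraT => nc; exfalso; apply: ha.
  exists P; split=> //.
  have m1 := gt1 _ nc.
  have pp := pdiv_prime m1.
  have pd : (pdiv (gcdn (e_quot G P) d) %| d)%N :=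
    dvdn_trans (pdiv_dvd _) (dvdn_gcdr _ _).
  have pe : (pdiv (gcdn (e_quot G P) d) %| e_quot G P)%N :=
    dvdn_trans (pdiv_dvd _) (dvdn_gcdl _ _).
  have [g1 _] := gcd_set_spec (fun i => exists x, G i x /\ ~ P x).
  move=> x [xn [i [Gi ci]]]; apply: NNPP => nPx.
  have := g1 i (ex_intro _ x (conj Gi nPx)); rewrite dvdzE absz_nat => ei.
  have pi := dvdn_trans pe ei.
  have : (pdiv (gcdn (e_quot G P) d) %| gcdn `|i| d)%N by rewrite dvdn_gcd pi pd.
  by rewrite (eqP ci) (Euclid_dvd1 pp).
- move=> hb [P [h1 hX]].
  have [pP [c1 nc2]] := h1.
  have [hPi n1 prP] := pP.
  have [x0 X0] := Xne; have [x0n [i0 [Gi0 _]]] := X0.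
  have Peq : forall x, P x -> Pstar G P x.
    move=> x Px; apply: NNPP => nx; apply: nc2.
    exists (fun k => if k == 0%N then (fun z => z = 0%R)
                     else if k == 1%N then Pstar G P else P).
    split.
    + move=> [|[|k]] _ /=.
      * split.
        -- split; first by [].
           ++ by move=> a b -> ->; rewrite subrr.
           ++ by move=> a b ->; rewrite mulr0.
        -- by move=> /eqP; rewrite oner_eq0.
        -- by move=> a b /eqP; rewrite mulf_eq0 => /orP [/eqP|/eqP]; [left|right].
      * exact: Pstar_prime.
      * exact: pP.
    + move=> [|[|k]] //= _.
      * split; first by move=> z -> k; rewrite comp0 //; case: hPi.
        exists x0; split=> //; apply: (Pstar_hom hG hPi Gi0); exact: hX.
      * split; first by move=> z; apply: Pstar_sub.
        by exists x.
    + by move=> z.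
  have hom : is_homogeneous_ideal G P := hom_of_Pstar hG hPi Peq.
  have cop := hb P hom h1.
  pose SP := fun i : int => exists x, G i x /\ ~ P x.
  have Sadd : forall a b, SP a -> SP b -> SP (a + b)%R.
    move=> a b [x [Gx nx]] [y [Gy ny]]; exists (x * y)%R; split; first exact: GM.
    by move=> /prP [].
  have [s [[x [Gx nPx]] cs]] := add_closed_coprime Sadd d1 cop.
  apply: (nPx); apply: hX; split.
    by move=> x0'; apply: nPx; rewrite x0'; case: hPi.
  by exists s.
Qed.
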